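(* Consider the linear regression model $\boldsymbol{Y}=\boldsymbol{X}\boldsymbol{\beta}+\boldsymbol{\varepsilon}$, where $\boldsymbol{X}$ is a known $n\times p$ matrix with linearly independent columns ($n>p$) and $\boldsymbol{\varepsilon}\sim N(\boldsymbol{0},\sigma^2\boldsymbol{I}_n)$, $\sigma^2>0$ unknown. Let $\theta=\boldsymbol{a}^T\boldsymbol{\beta}$ ($\boldsymbol{a}\neq\boldsymbol{0}$ given), $\boldsymbol{\tau}=\boldsymbol{C}^T\boldsymbol{\beta}-\boldsymbol{t}$ with $\boldsymbol{C}$ a given $p\times s$ matrix ($s<p$) of linearly independent columns, $\boldsymbol{t}$ a given $s$-vector, and $\boldsymbol{a}$ not in the column span of $\boldsymbol{C}$. Let $\hat{\boldsymbol{\beta}}$ be the least squares estimator, $\hat\Sigma^2=\|\boldsymbol{Y}-\boldsymbol{X}\hat{\boldsymbol{\beta}}\|^2/(n-p)$, $\hat\Theta=\boldsymbol{a}^T\hat{\boldsymbol{\beta}}$, $\hat{\boldsymbol{\tau}}=\boldsymbol{C}^T\hat{\boldsymbol{\beta}}-\boldsymbol{t}$, and assume $E\big((\hat{\boldsymbol{\tau}}-\boldsymbol{\tau})(\hat\Theta-\theta)\big)=\boldsymbol{0}$. Let $v_{11}=\boldsymbol{a}^T(\boldsymbol{X}^T\boldsymbol{X})^{-1}\boldsymbol{a}$, $\boldsymbol{V}_{22}=\boldsymbol{C}^T(\boldsymbol{X}^T\boldsymbol{X})^{-1}\boldsymbol{C}$, $F=\big(\hat{\boldsymbol{\tau}}^T\boldsymbol{V}_{22}^{-1}\hat{\boldsymbol{\tau}}/s\big)/\hat\Sigma^2$,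 and for a function $d:[0,\infty)\to(0,\infty)$ let $J(d)=[\hat\Theta-\sqrt{v_{11}}\hat\Sigma d(\sqrt F),\ \hat\Theta+\sqrt{v_{11}}\hat\Sigma d(\sqrt F)]$. Suppose $d_1,d_2:[0,\infty)\to(0,\infty)$ satisfy $d_1(x)\ge d_2(x)$ for all $x\ge0$, and that there exist $\epsilon>0$ and an interval $[a,b]$ with $0\le a<b$ such that $d_1(x)>d_2(x)+\epsilon$ for all $x\in[a,b]$. Then $E(\text{length of }J(d_1))>E(\text{length of }J(d_2))$ for all values of $\|\boldsymbol{\gamma}\|$, where $\boldsymbol{\gamma}=(1/\sigma)\boldsymbol{V}_{22}^{-1/2}\boldsymbol{\tau}$.
   Context: $\|\boldsymbol{\gamma}\|=\sqrt{\boldsymbol{\gamma}^T\boldsymbol{\gamma}}$; the claim holds for all parameter values $(\boldsymbol{\beta},\sigma^2)$. *)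

(* Defs.v *)
From HB Require Import structures.
From mathcomp Require Import all_boot all_order all_algebra.
From mathcomp Require Import all_classical all_reals all_analysis.
Set Implicit Arguments. Unset Strict Implicit. Unset Printing Implicit Defensive.
Import Order.TTheory GRing.Theory Num.Theory.
Local Open Scope classical_set_scope.
Local Open Scope ring_scope.

Section Regression.
Context {R : realType}.

Definition sqnorm {m : nat} (v : 'cV[R]_m) : R := (v^T *m v) 0 0.

Definition lse {n p : nat} (X : 'M[R]_(n, p)) (Y : 'cV[R]_n) : 'cV[R]_p :=
  invmx (X^T *m X) *m X^T *m Y.

Definition Sigma_hat {n p : nat} (X : 'M[R]_(n, p)) (Y : 'cV[R]_n) : R :=
  Num.sqrt (sqnorm (Y - X *m lse X Y) / (n - p)%:R).

Definition Theta_hat {n p : nat} (X : 'M[R]_(n, p)) (a : 'cV[R]_p)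
  (Y : 'cV[R]_n) : R := (a^T *m lse X Y) 0 0.

Definition tau_hat {n p s : nat} (X : 'M[R]_(n, p)) (C : 'M[R]_(p, s))
  (t : 'cV[R]_s) (Y : 'cV[R]_n) : 'cV[R]_s := C^T *m lse X Y - t.

Definition v11 {n p : nat} (X : 'M[R]_(n, p)) (a : 'cV[R]_p) : R :=
  (a^T *m invmx (X^T *m X) *m a) 0 0.

Definition V22 {n p s : nat} (X : 'M[R]_(n, p)) (C : 'M[R]_(p, s)) : 'M[R]_s :=
  C^T *m invmx (X^T *m X) *m C.

Definition Fstat {n p s : nat} (X : 'M[R]_(n, p)) (C : 'M[R]_(p, s))
  (t : 'cV[R]_s) (Y : 'cV[R]_n) : R :=
  (((tau_hat X C t Y)^T *m invmx (V22 X C) *m tau_hat X C t Y) 0 0 / s%:R)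
    / (Sigma_hat X Y ^+ 2).

Definition lengthJ {n p s : nat} (X : 'M[R]_(n, p)) (a : 'cV[R]_p)
  (C : 'M[R]_(p, s)) (t : 'cV[R]_s) (d : R -> R) (Y : 'cV[R]_n) : R :=
  (Theta_hat X a Y + Num.sqrt (v11 X a) * Sigma_hat X Y * d (Num.sqrt (Fstat X C t Y)))
  - (Theta_hat X a Y - Num.sqrt (v11 X a) * Sigma_hat X Y * d (Num.sqrt (Fstat X C t Y))).

End Regression.

(* eps = (eps_0,...,eps_{n-1}) are i.i.d. N(0, sigma^2) on the probability space P:
   each eps_i is measurable with law normal_prob 0 sigma (sigma = standard
   deviation), and the family is mutually independent (product rule). *)
Definition iid_normal_noise {d : measure_display} {T : measurableType d}
  {R : realType} (P : probability T R) (n : nat) (sigma : R)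
  (eps : 'I_n -> T -> R) : Prop :=
  (forall i, measurable_fun setT (eps i)) /\
  (forall i (A : set R), measurable A ->
     P (eps i @^-1` A) = normal_prob 0 sigma A) /\
  (forall A : 'I_n -> set R, (forall i, measurable (A i)) ->
     P [set w | forall i, A i (eps i w)] = (\prod_(i < n) P (eps i @^-1` A i))%E).

Definition noise_vec {T : Type} {R : realType} {n : nat} (eps : 'I_n -> T -> R)
  (w : T) : 'cV[R]_n := \col_i eps i w.

(* Main.v *)
Require Import Defs.
From HB Require Import structures.
From mathcomp Require Import all_boot all_order all_algebra.
From mathcomp Require Import all_classical all_reals all_analysis.
From mathcomp Require Import ring lra measurable_realfun.
Set Implicit Arguments. Unset Strict Implicit. Unset Printing Implicit Defensive.
Import Order.TTheory GRing.Theory Num.Theory.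
Import numFieldNormedType.Exports.
Local Open Scope classical_set_scope.
Local Open Scope ring_scope.
Section LA.
Context {R : realType}.

Lemma sqnormE m (v : 'cV[R]_m) : sqnorm v = \sum_i v i 0 ^+ 2.
Proof. by rewrite /sqnorm mxE; apply: eq_bigr => i _; rewrite mxE expr2. Qed.

Lemma sqnorm_ge0 m (v : 'cV[R]_m) : 0 <= sqnorm v.
Proof. by rewrite sqnormE; apply: sumr_ge0 => i _; exact: sqr_ge0. Qed.

Lemma sqnorm_eq0 m (v : 'cV[R]_m) : sqnorm v = 0 -> v = 0.
Proof.
rewrite sqnormE => h; apply/matrixP => i j; rewrite (ord1 j) mxE.
have := @psumr_eq0P _ _ _ _ (fun i _ => sqr_ge0 (v i 0)) h i isT.
by move/eqP; rewrite sqrf_eq0 => /eqP.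
Qed.

Lemma inj_of_rank k m (A : 'M[R]_(k, m)) : \rank A = m ->
  forall v : 'cV[R]_m, A *m v = 0 -> v = 0.
Proof.
move=> hA v hv.
have rf : row_free A^T by rewrite /row_free mxrank_tr hA.
apply: trmx_inj; apply/eqP; rewrite trmx0 -(mulmx_free_eq0 _ rf) -trmx_mul hv trmx0.
by [].
Qed.

Lemma unit_of_inj k (A : 'M[R]_k) : (forall v : 'cV[R]_k, A *m v = 0 -> v = 0) -> A \in unitmx.
Proof.
move=> hA; rewrite -unitmx_tr unitmxE unitfE; apply/negP => /det0P [v vn0 hv].
have : A *m v^T = 0 by apply: trmx_inj; rewrite trmx_mul trmxK hv trmx0.
move/hA => /(congr1 trmx); rewrite trmxK trmx0 => v0.
by move: vn0; rewrite v0 eqxx.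
Qed.

Lemma quad_sq k m (A : 'M[R]_(k, m)) v : sqnorm (A *m v) = (v^T *m (A^T *m A) *m v) 0 0.
Proof. by rewrite /sqnorm trmx_mul !mulmxA. Qed.

Lemma XtX_unit n p (X : 'M[R]_(n, p)) : \rank X = p -> X^T *m X \in unitmx.
Proof.
move=> hX; apply: unit_of_inj => v hv; apply: (inj_of_rank hX).
by apply: sqnorm_eq0; rewrite quad_sq -mulmxA hv mulmx0 mxE.
Qed.

Lemma Msym n p (X : 'M[R]_(n, p)) : (invmx (X^T *m X))^T = invmx (X^T *m X).
Proof. by rewrite trmx_inv trmx_mul trmxK. Qed.

Lemma M_quad n p (X : 'M[R]_(n, p)) (x : 'cV[R]_p) : \rank X = p ->
  (x^T *m invmx (X^T *m X) *m x) 0 0 = sqnorm (X *m (invmx (X^T *m X) *m x)).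
Proof.
move=> hX; rewrite quad_sq trmx_mul Msym.
rewrite -!mulmxA.
by rewrite (mulmxA X^T) (mulmxA (X^T *m X)) (mulmxV (XtX_unit hX)) mul1mx.
Qed.

Lemma M_pd n p (X : 'M[R]_(n, p)) (x : 'cV[R]_p) : \rank X = p -> x != 0 ->
  0 < (x^T *m invmx (X^T *m X) *m x) 0 0.
Proof.
move=> hX xn0; rewrite M_quad // lt_def sqnorm_ge0 andbT; apply/eqP => /sqnorm_eq0.
move/(inj_of_rank hX) => /(congr1 (mulmx (X^T *m X))).
rewrite mulmxA (mulmxV (XtX_unit hX)) mul1mx mulmx0 => x0.
by move: xn0; rewrite x0 eqxx.
Qed.

Lemma M_ge0 n p (X : 'M[R]_(n, p)) (x : 'cV[R]_p) : \rank X = p ->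
  0 <= (x^T *m invmx (X^T *m X) *m x) 0 0.
Proof. by move=> hX; rewrite M_quad // sqnorm_ge0. Qed.

Lemma V22_quad n p s (X : 'M[R]_(n, p)) (C : 'M[R]_(p, s)) (g : 'cV[R]_s) :
  (g^T *m V22 X C *m g) 0 0 = ((C *m g)^T *m invmx (X^T *m X) *m (C *m g)) 0 0.
Proof. by rewrite /V22 trmx_mul !mulmxA. Qed.

Lemma V22_unit n p s (X : 'M[R]_(n, p)) (C : 'M[R]_(p, s)) :
  \rank X = p -> \rank C = s -> V22 X C \in unitmx.
Proof.
move=> hX hC; apply: unit_of_inj => v hv; apply: (inj_of_rank hC).
apply/eqP; apply: contraT => Cv0.
have := M_pd hX Cv0; rewrite -V22_quad -mulmxA hv mulmx0 mxE ltxx.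
by [].
Qed.

Lemma V22sym n p s (X : 'M[R]_(n, p)) (C : 'M[R]_(p, s)) : (V22 X C)^T = V22 X C.
Proof. by rewrite /V22 !trmx_mul trmxK Msym mulmxA. Qed.

Lemma exists_perp n p (X : 'M[R]_(n, p)) : \rank X = p -> (p < n)%N ->
  exists z : 'cV[R]_n, z != 0 /\ X^T *m z = 0.
Proof.
move=> hX pn.
have : kermx X != 0.
  apply/eqP => K0; have := mxrank_ker X; rewrite K0 mxrank0 hX => /esym/eqP.
  by rewrite subn_eq0 leqNgt pn.
move=> K.
have [i hi] : exists i, row i (kermx X) != 0.
  case: (pselect (exists i, row i (kermx X) != 0)) => // hn.
  exfalso; move/eqP: K; apply.
  apply/row_matrixP => i; rewrite row0; apply/eqP; apply/negPn/negP => h.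
  by apply: hn; exists i.
exists (row i (kermx X))^T; split.
  by apply/eqP => /(congr1 trmx); rewrite trmxK trmx0 => h; move: hi; rewrite h eqxx.
by rewrite -(trmxK X) -trmx_mul -row_mul mulmx_ker row0 trmx0.
Qed.

Lemma CT_surj p s (C : 'M[R]_(p, s)) : \rank C = s ->
  forall r : 'cV[R]_s, exists u, C^T *m u = r.
Proof.
move=> hC r.
have : (r^T <= C)%MS by apply: submx_full; rewrite /row_full hC.
case/submxP => D hD; exists D^T.
by rewrite -trmx_mul -hD trmxK.
Qed.

End LA.
Section Point.
Context {R : realType} (n p s : nat) (X : 'M[R]_(n, p)) (C : 'M[R]_(p, s))
  (t : 'cV[R]_s) (beta : 'cV[R]_p).
Hypotheses (hX : \rank X = p) (hC : \rank C = s) (pn : (p < n)%N) (s0 : (0 < s)%N).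

Lemma lse_shift (u : 'cV[R]_p) (z : 'cV[R]_n) : X^T *m z = 0 ->
  lse X (X *m beta + (X *m u + z)) = beta + u.
Proof.
move=> hz; rewrite /lse addrA -(mulmxDr X beta u) -mulmxA.
rewrite (mulmxDr X^T) hz addr0 mulmxA.
by rewrite mulKmx // XtX_unit.
Qed.

Lemma resid_shift (u : 'cV[R]_p) (z : 'cV[R]_n) : X^T *m z = 0 ->
  forall Y, Y = X *m beta + (X *m u + z) -> Y - X *m lse X Y = z.
Proof.
move=> hz Y hY; rewrite {2}hY lse_shift // hY mulmxDr.
by rewrite opprD addrACA subrr add0r addrC addKr.
Qed.

Lemma Sigma_hat_shift (u : 'cV[R]_p) (z : 'cV[R]_n) : X^T *m z = 0 ->
  Sigma_hat X (X *m beta + (X *m u + z)) = Num.sqrt (sqnorm z / (n - p)%:R).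
Proof. by move=> hz; rewrite /Sigma_hat (resid_shift hz (erefl _)). Qed.

Lemma exists_point (m : R) : 0 < m ->
  exists e0 : 'cV[R]_n, 0 < Sigma_hat X (X *m beta + e0) /\
    Num.sqrt (Fstat X C t (X *m beta + e0)) = m.
Proof.
move=> m0.
pose g : 'cV[R]_s := const_mx 1.
have gn0 : g != 0.
  apply/eqP => /matrixP /(_ (Ordinal s0) 0); rewrite !mxE => /eqP.
  by rewrite oner_eq0.
have Cgn0 : C *m g != 0 by apply/eqP => /(inj_of_rank hC) => g0; move: gn0; rewrite g0 eqxx.
pose q := (g^T *m V22 X C *m g) 0 0.
have q0 : 0 < q by rewrite /q V22_quad M_pd.
have [u hu] := CT_surj hC (V22 X C *m g + t - C^T *m beta).
have [z0 [z0n0 hz0]] := exists_perp hX pn.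
pose w := sqnorm z0 / (n - p)%:R.
have npgt0 : 0 < (n - p)%:R :> R by rewrite ltr0n subn_gt0.
have w0 : 0 < w.
  rewrite /w divr_gt0 // lt_def sqnorm_ge0 andbT.
  by apply/eqP => /sqnorm_eq0 h; move: z0n0; rewrite h eqxx.
have sgt0 : 0 < s%:R :> R by rewrite ltr0n.
pose c2 := (q / s%:R) / (m ^+ 2 * w).
have c20 : 0 < c2 by rewrite /c2 !divr_gt0 // mulr_gt0 // exprn_gt0.
pose c := Num.sqrt c2.
have hz : X^T *m (c *: z0) = 0 by rewrite -scalemxAr hz0 scaler0.
exists (X *m u + c *: z0).
have hl := lse_shift u hz.
have res : X *m beta + (X *m u + c *: z0) - X *m lse X (X *m beta + (X *m u + c *: z0))
   = c *: z0.
  by rewrite hl mulmxDr opprD addrACA subrr add0r addrC addKr.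
have Sg : Sigma_hat X (X *m beta + (X *m u + c *: z0)) = Num.sqrt (c2 * w).
  have sq : sqnorm (c *: z0) = c ^+ 2 * sqnorm z0.
    rewrite /sqnorm linearZ /= scalemxAl linearZ /= -scalemxAl !mxE.
    by rewrite expr2 -mulrA; congr (c * _); rewrite mulr_sumr; apply: eq_bigr => j _; rewrite !mxE mulrA.
  by rewrite Sigma_hat_shift // sq /w mulrA sqr_sqrtr ?ltW.
have tauE : tau_hat X C t (X *m beta + (X *m u + c *: z0)) = V22 X C *m g.
  by rewrite /tau_hat hl mulmxDr hu addrCA subrr addr0 addrK.
have Sgp : 0 < c2 * w by rewrite mulr_gt0.
split; first by rewrite Sg sqrtr_gt0.
rewrite /Fstat tauE Sg sqr_sqrtr ?(ltW Sgp) //.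
rewrite trmx_mul V22sym -(mulmxA (g^T *m V22 X C)) (mulmxA (invmx (V22 X C))).
rewrite (mulVmx (V22_unit hX hC)) mul1mx -/q /c2.
have -> : q / s%:R / (q / s%:R / (m ^+ 2 * w) * w) = m ^+ 2.
  by field; rewrite !gt_eqF.
have hm : Num.sqrt (m ^+ 2) = m by rewrite sqrtr_sqr gtr0_norm.
exact: hm.
Qed.

End Point.
Section Cont.
Context {R : realType} {N : nat}.

Definition ecnt a b (f : 'cV[R]_N -> 'M[R]_(a, b)) :=
  forall (i : 'I_a) (j : 'I_b), continuous (fun e : 'cV[R]_N => f e i j).

Lemma cont_sum k (h : 'I_k -> 'cV[R]_N -> R) :
  (forall i, continuous (h i)) -> continuous (fun e => \sum_i h i e).
Proof. by move=> H; apply: continuous_big => //; exact: add_continuous. Qed.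

Lemma ecnt_id : ecnt (fun e => e).
Proof. by move=> i j; exact: coord_continuous. Qed.

Lemma ecnt_cst a b (A : 'M[R]_(a, b)) : ecnt (fun _ => A).
Proof. by move=> i j; exact: cst_continuous. Qed.

Lemma ecnt_add a b (f g : 'cV[R]_N -> 'M[R]_(a, b)) :
  ecnt f -> ecnt g -> ecnt (fun e => f e + g e).
Proof.
move=> hf hg i j; rewrite (_ : (fun e => _) = (fun e => f e i j) + (fun e => g e i j)).
  by move=> x; apply: continuousD; [exact: hf | exact: hg].
by apply/funext => e; rewrite !mxE.
Qed.

Lemma ecnt_opp a b (f : 'cV[R]_N -> 'M[R]_(a, b)) :
  ecnt f -> ecnt (fun e => - f e).
Proof.
move=> hf i j; rewrite (_ : (fun e => _) = (fun e => - f e i j)).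
  by move=> x; apply: continuousN; exact: hf.
by apply/funext => e; rewrite !mxE.
Qed.

Lemma ecnt_mul a b c (f : 'cV[R]_N -> 'M[R]_(a, b)) (g : 'cV[R]_N -> 'M[R]_(b, c)) :
  ecnt f -> ecnt g -> ecnt (fun e => f e *m g e).
Proof.
move=> hf hg i j; rewrite (_ : (fun e => _) = (fun e => \sum_k f e i k * g e k j)).
  apply: cont_sum => k x; apply: continuousM; [exact: hf | exact: hg].
by apply/funext => e; rewrite !mxE.
Qed.

Lemma ecnt_tr a b (f : 'cV[R]_N -> 'M[R]_(a, b)) :
  ecnt f -> ecnt (fun e => (f e)^T).
Proof.
move=> hf i j; rewrite (_ : (fun e => _) = (fun e => f e j i)); first exact: hf.
by apply/funext => e; rewrite !mxE.
Qed.

End Cont.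
Section Meas.
Context {R : realType}.

Lemma inv_measurable : measurable_fun setT (@GRing.inv R).
Proof.
have -> : [set: R] = [set 0] `|` [set x | x != 0].
  by apply/seteqP; split => x //= _; case: (eqVneq x 0) => h; [left | right].
apply/measurable_funU => //.
  rewrite (_ : [set x : R | x != 0] = ~` [set 0]); first exact: measurableC.
  by apply/seteqP; split => x /=; move/eqP.
split; first exact: measurable_fun_set1.
apply: open_continuous_measurable_fun; first exact: open_neq.
by move=> x; rewrite inE /= => xn0; exact: inv_continuous.
Qed.

Lemma normal_itv_gt0 (sigma x r : R) : 0 < sigma -> 0 < r ->
  (0 < normal_prob 0 sigma `](x - r)%R, (x + r)%R[)%E.
Proof.
move=> s0 r0.
pose K : R := `|x| + r.
pose k : R := normal_peak sigma * expR (- K ^+ 2 / (sigma ^+ 2 *+ 2)).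
have k0 : 0 < k by rewrite mulr_gt0 ?expR_gt0 ?normal_peak_gt0 ?gt_eqF.
have mI : measurable (`]x - r, x + r[%classic : set R) by exact: measurable_itv.
apply: (@lt_le_trans _ _ (\int[lebesgue_measure]_(y in `](x - r)%R, (x + r)%R[) (cst k%:E y))%E).
  rewrite integral_cst //.
  have hl := @lebesgue_measure_itv R `]x - r, x + r[.
  rewrite /= ifT in hl; last by rewrite lte_fin ltrD2l gtrN.
  have -> : lebesgue_measure_lebesgue_measure__canonical__measure_function_Measure R `](x - r)%R, (x + r)%R[%classic = ((x + r)%:E - (x - r)%:E)%E by exact: hl.
  by rewrite -EFinB mule_gt0 // lte_fin subr_gt0 ltrD2l gtrN.
apply: ge0_le_integral => //.
- by move=> y _; rewrite lee_fin ltW.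
- by apply/measurable_EFinP; apply: measurable_funTS; exact: measurable_normal_pdf.
move=> y; rewrite /= in_itv /= => /andP [h1 h2]; rewrite lee_fin /normal_pdf gt_eqF //.
rewrite /k ler_pM2l ?normal_peak_gt0 ?gt_eqF // /normal_fun ler_expR subr0.
rewrite !mulNr lerN2 ler_pM2r ?invr_gt0 ?mulrn_wgt0 ?exprn_gt0 //.
have a1 := ler_norm x.
have a2 : - x <= `|x| by rewrite -normrN ler_norm.
have h3 : - K <= y by rewrite /K; lra.
have h4 : y <= K by rewrite /K; lra.
nra.
Qed.

End Meas.
Section Main.
Context {R : realType} (n p s : nat) (X : 'M[R]_(n, p)) (a : 'cV[R]_p)
  (C : 'M[R]_(p, s)) (t : 'cV[R]_s) (beta : 'cV[R]_p).

Definition Sg (e : 'cV[R]_n) := Sigma_hat X (X *m beta + e).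
Definition Fs (e : 'cV[R]_n) := Fstat X C t (X *m beta + e).

Lemma lengthJE d (Y : 'cV[R]_n) : lengthJ X a C t d Y =
  2 * (Num.sqrt (v11 X a) * Sigma_hat X Y * d (Num.sqrt (Fstat X C t Y))).
Proof. rewrite /lengthJ; ring. Qed.

Lemma ecnt_Y : ecnt (fun e : 'cV[R]_n => X *m beta + e).
Proof. exact: (ecnt_add (ecnt_cst (A := X *m beta)) (@ecnt_id R n)). Qed.

Lemma ecnt_lse : ecnt (fun e : 'cV[R]_n => lse X (X *m beta + e)).
Proof. exact: (ecnt_mul (ecnt_cst (A := invmx (X^T *m X) *m X^T)) ecnt_Y). Qed.

Lemma ecnt_res : ecnt (fun e : 'cV[R]_n =>
  (X *m beta + e) - X *m lse X (X *m beta + e)).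
Proof. exact: (ecnt_add ecnt_Y (ecnt_opp (ecnt_mul (ecnt_cst (A := X)) ecnt_lse))). Qed.

Lemma Sg_cont (x : 'cV[R]_n) : {for x, continuous Sg}.
Proof.
have h := ecnt_mul (ecnt_tr ecnt_res) ecnt_res (i:=0) (j:=0).
have h2 : {for x, continuous (fun e : 'cV[R]_n =>
    (((X *m beta + e) - X *m lse X (X *m beta + e))^T *m
     ((X *m beta + e) - X *m lse X (X *m beta + e))) 0 0 * (n - p)%:R^-1)}.
  exact: (continuousM (h x) (@cst_continuous _ _ ((n - p)%:R^-1 : R) x)).
exact: (continuous_comp h2 (@sqrt_continuous R _)).
Qed.

Lemma ecnt_tau : ecnt (fun e : 'cV[R]_n => C^T *m lse X (X *m beta + e) - t).
Proof. exact: (ecnt_add (ecnt_mul (ecnt_cst (A := C^T)) ecnt_lse) (ecnt_opp (ecnt_cst (A := t)))). Qed.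

Lemma Fs_cont e0 : Sg e0 != 0 -> {for e0, continuous Fs}.
Proof.
move=> Sn0.
have hq := ecnt_mul (ecnt_mul (ecnt_tr ecnt_tau) (ecnt_cst (A := invmx (V22 X C)))) ecnt_tau (i:=0) (j:=0).
have hA : {for e0, continuous (fun e : 'cV[R]_n =>
    (((C^T *m lse X (X *m beta + e) - t)^T *m invmx (V22 X C)) *m
     (C^T *m lse X (X *m beta + e) - t)) 0 0 * s%:R^-1)}.
  exact: (continuousM (hq e0) (@cst_continuous _ _ (s%:R^-1 : R) e0)).
have hS2 := continuousM (Sg_cont (x:=e0)) (Sg_cont (x:=e0)).
have hV := @continuousV _ _ (Sg \* Sg) e0 (mulf_neq0 Sn0 Sn0) hS2.
exact: (continuousM hA hV).
Qed.

Lemma good_nbhs e0 (dl lo hi : R) : 0 < Sg e0 -> dl < Sg e0 ->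
  lo < Num.sqrt (Fs e0) -> Num.sqrt (Fs e0) < hi ->
  exists eps : R, 0 < eps /\ forall e : 'cV[R]_n,
    (forall i, `|e0 i 0 - e i 0| < eps) ->
    [/\ dl < Sg e, lo < Num.sqrt (Fs e) & Num.sqrt (Fs e) < hi].
Proof.
move=> S0 hdl hlo hhi.
have cF : {for e0, continuous (fun e => Num.sqrt (Fs e))}.
  exact: (continuous_comp (Fs_cont (lt0r_neq0 S0)) (@sqrt_continuous R _)).
have c1 := cvgr_gt (Sg e0) (Sg_cont (x:=e0)) dl hdl.
have c2 := cvgr_gt (Num.sqrt (Fs e0)) cF lo hlo.
have c3 := cvgr_lt (Num.sqrt (Fs e0)) cF hi hhi.
have hN : nbhs e0 [set e | dl < Sg e /\ (lo < Num.sqrt (Fs e) /\ Num.sqrt (Fs e) < hi)].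
  exact: (filterI (c1 _) (filterI (c2 _) (c3 _))).
have [eps eps0 hb] := (nbhs_ballP e0 _).1 hN.
exists eps; split => // e he.
have : ball e0 eps e.
  rewrite -ball_normE /ball_ /= (_ : `|e0 - e| = mx_norm (e0 - e)) // mx_normrE.
  apply: bigmax_lt => // [[i j]] _ /=; rewrite (ord1 j) !mxE; exact: he.
by move/hb => [h1 [h2 h3]]; split.
Qed.

End Main.
Section MeasF.
Context {R : realType} {dd : measure_display} {T : measurableType dd}.

Definition emf a b (f : T -> 'M[R]_(a, b)) :=
  forall (i : 'I_a) (j : 'I_b), measurable_fun setT (fun w => f w i j).

Lemma em_cst a b (A : 'M[R]_(a, b)) : emf (fun _ => A).
Proof. by move=> i j; exact: measurable_cst. Qed.

Lemma em_add a b (f g : T -> 'M[R]_(a, b)) :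
  emf f -> emf g -> emf (fun w => f w + g w).
Proof.
move=> hf hg i j; rewrite (_ : (fun w => _) = (fun w => f w i j) \+ (fun w => g w i j)).
  exact: measurable_funD.
by apply/funext => w; rewrite !mxE.
Qed.

Lemma em_opp a b (f : T -> 'M[R]_(a, b)) : emf f -> emf (fun w => - f w).
Proof.
move=> hf i j; rewrite (_ : (fun w => _) = \- (fun w => f w i j)).
  exact: measurable_funN.
by apply/funext => w; rewrite !mxE.
Qed.

Lemma em_mul a b c (f : T -> 'M[R]_(a, b)) (g : T -> 'M[R]_(b, c)) :
  emf f -> emf g -> emf (fun w => f w *m g w).
Proof.
move=> hf hg i j; rewrite (_ : (fun w => _) = (fun w => \sum_k f w i k * g w k j)).
  by apply: measurable_sum => k; exact: measurable_funM.
by apply/funext => w; rewrite !mxE.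
Qed.

Lemma em_tr a b (f : T -> 'M[R]_(a, b)) : emf f -> emf (fun w => (f w)^T).
Proof.
move=> hf i j; rewrite (_ : (fun w => _) = (fun w => f w j i)); first exact: hf.
by apply/funext => w; rewrite !mxE.
Qed.

Lemma meas_forall k (S : 'I_k -> set T) : (forall i, measurable (S i)) ->
  measurable [set w | forall i, S i w].
Proof.
move=> hS.
have E : forall (r : seq 'I_k) w, (\big[setI/setT]_(i <- r) S i) w <-> (forall i, i \in r -> S i w).
  elim => [|i r IH] w; first by rewrite big_nil; split.
  rewrite big_cons; split.
    by move=> [h1 /IH h2] j; rewrite inE => /orP [/eqP -> // | /h2].
  move=> h; split; first by apply: h; rewrite inE eqxx.
  by apply/IH => j jr; apply: h; rewrite inE jr orbT.
rewrite (_ : [set w | _] = \big[setI/setT]_(i <- index_enum 'I_k) S i).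
  by apply: big_ind => //; exact: measurableI.
apply/seteqP; split => w /=.
  by move=> h; apply/E => i _; exact: h.
by move/E => h i; apply: h; rewrite mem_index_enum.
Qed.

End MeasF.

Lemma prode_gt0' {R : realType} k (f : 'I_k -> \bar R) :
  (forall i, (0 < f i)%E) -> (0 < \prod_i f i)%E.
Proof.
move=> h; apply: (big_ind (fun x => (0 < x)%E)) => //.
by move=> x y hx hy; exact: mule_gt0.
Qed.
Theorem theorem4 (R : realType) (n p s : nat)
  (X : 'M[R]_(n, p)) (a : 'cV[R]_p) (C : 'M[R]_(p, s)) (t : 'cV[R]_s)
  (d1 d2 : R -> R)
  (beta : 'cV[R]_p) (sigma : R)
  (dsp : measure_display) (T : measurableType dsp) (P : probability T R)
  (eps : 'I_n -> T -> R) :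
  (p < n)%N -> (0 < s)%N -> (s < p)%N ->
  \rank X = p ->
  \rank C = s ->
  a != 0 ->
  ~ (exists w : 'cV[R]_s, a = C *m w) ->
  0 < sigma ->
  iid_normal_noise P sigma eps ->
  (* E((tauhat - tau)(Thetahat - theta)) = 0, componentwise *)
  (forall i : 'I_s,
     (\int[P]_w
        (((tau_hat X C t (X *m beta + noise_vec eps w) - (C^T *m beta - t)) i 0)
         * (Theta_hat X a (X *m beta + noise_vec eps w) - (a^T *m beta) 0 0))%:E
      = 0)%E) ->
  (forall x, 0 <= x -> 0 < d1 x) ->
  (forall x, 0 <= x -> 0 < d2 x) ->
  measurable_fun (`[(0:R), +oo[%classic) d1 ->
  measurable_fun (`[(0:R), +oo[%classic) d2 ->
  (forall x, 0 <= x -> d2 x <= d1 x) ->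
  (exists e : R, exists lo : R, exists hi : R,
     [/\ 0 < e, 0 <= lo, lo < hi &
         forall x, lo <= x <= hi -> d2 x + e < d1 x]) ->
  (\int[P]_w (lengthJ X a C t d2 (X *m beta + noise_vec eps w))%:E < +oo)%E ->
  (\int[P]_w (lengthJ X a C t d2 (X *m beta + noise_vec eps w))%:E
   < \int[P]_w (lengthJ X a C t d1 (X *m beta + noise_vec eps w))%:E)%E.
Proof.
move=> pn s0 _ hX hC an0 _ sig0 [meps [law indep]] _ d1pos d2pos md1 md2 d21.
move=> [e [lo [hi [e0 lo0 lohi hgap]]]] fin2.
pose ne := fun w => noise_vec eps w.
have emn : emf ne.
  move=> i j; rewrite (_ : (fun w => _) = eps i); first exact: meps.
  by apply/funext => w; rewrite /ne /noise_vec mxE.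
have emY : emf (fun w => X *m beta + ne w) := em_add (em_cst (X *m beta)) emn.
have emlse : emf (fun w => lse X (X *m beta + ne w)) :=
  em_mul (em_cst (invmx (X^T *m X) *m X^T)) emY.
have emres : emf (fun w => (X *m beta + ne w) - X *m lse X (X *m beta + ne w)) :=
  em_add emY (em_opp (em_mul (em_cst (X)) emlse)).
have emtau : emf (fun w => C^T *m lse X (X *m beta + ne w) - t) :=
  em_add (em_mul (em_cst (C^T)) emlse) (em_opp (em_cst (t))).
have msqrt : measurable_fun setT (@Num.sqrt R) :=
  continuous_measurable_fun (@sqrt_continuous R).
have mSg : measurable_fun setT (fun w => Sg X beta (ne w)).
  have mh := em_mul (em_tr emres) emres 0 0.
  exact: (measurableT_comp msqrt (measurable_funM mh (measurable_cst ((n - p)%:R^-1 : R)))).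
have mFs : measurable_fun setT (fun w => Fs X C t beta (ne w)).
  have mq := em_mul (em_mul (em_tr emtau) (em_cst (invmx (V22 X C)))) emtau 0 0.
  apply: (measurable_funM (measurable_funM mq (measurable_cst (s%:R^-1 : R)))).
  exact: (measurableT_comp inv_measurable (measurable_funX 2 mSg)).
have mL : forall d, measurable_fun `[(0:R), +oo[%classic d ->
    measurable_fun setT (fun w => lengthJ X a C t d (X *m beta + ne w)).
  move=> d md.
  rewrite (_ : (fun w => _) = (fun w => 2 * (Num.sqrt (v11 X a) * Sg X beta (ne w) *
       d (Num.sqrt (Fs X C t beta (ne w)))))); last first.
    by apply/funext => w; rewrite lengthJE.
  apply: measurable_funM; first exact: measurable_cst.
  apply: measurable_funM; first by apply: measurable_funM => //; exact: measurable_cst.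
  apply: (measurable_comp (F := `[(0:R), +oo[%classic)) => //.
  - by move=> _ [w _ <-]; rewrite /= in_itv /= andbT sqrtr_ge0.
  - exact: (measurableT_comp msqrt mFs).
have mL1 := mL d1 md1; have mL2 := mL d2 md2.
pose L d w := lengthJ X a C t d (X *m beta + ne w).
have hv : 0 < v11 X a := M_pd hX an0.
pose v := Num.sqrt (v11 X a).
have v0 : 0 < v by rewrite sqrtr_gt0.
have LE : forall d w, L d w = 2 * (v * Sg X beta (ne w) * d (Num.sqrt (Fs X C t beta (ne w)))).
  by move=> d w; rewrite /L lengthJE.
have L2ge0 : forall w, 0 <= L d2 w.
  move=> w; rewrite LE; apply: mulr_ge0 => //; apply: mulr_ge0.
    by apply: mulr_ge0; [exact: ltW | exact: sqrtr_ge0].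
  by apply: ltW; apply: d2pos; exact: sqrtr_ge0.
pose m := (lo + hi) / 2.
have m0 : 0 < m by rewrite /m; lra.
have [y0 [Sy0 Fy0]] := exists_point t beta hX hC pn s0 m0.
pose dl := Sg X beta y0 / 2.
have Sy0' : 0 < Sg X beta y0 := Sy0.
have Fy0' : Num.sqrt (Fs X C t beta y0) = m := Fy0.
have dl0 : 0 < dl by rewrite /dl; lra.
have [ep [ep0 hbox]] := good_nbhs (X := X) (C := C) (t := t) (beta := beta)
  (e0 := y0) (dl := dl) (lo := lo) (hi := hi) Sy0'
  ltac:(rewrite /dl; lra) ltac:(rewrite Fy0' /m; lra) ltac:(rewrite Fy0' /m; lra).
pose A := fun i => (`](y0 i 0 - ep), (y0 i 0 + ep)[%classic : set R).
have mA : forall i, measurable (A i) by move=> i; exact: measurable_itv.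
have mpre : forall i, measurable (eps i @^-1` A i).
  by move=> i; rewrite -[X in measurable X]setTI; exact: meps.
pose B := [set w | forall i, A i (eps i w)].
have mB : measurable B := meas_forall mpre.
have PB : (0 < P B)%E.
  rewrite /B (indep A mA); apply: prode_gt0' => i; rewrite law //.
  exact: normal_itv_gt0.
pose k := 2 * (v * dl * e).
have k0 : 0 < k by rewrite /k !mulr_gt0.
have pw : forall w, L d2 w + k * \1_B w <= L d1 w.
  move=> w; rewrite !LE indicE.
  set S := Sg X beta (ne w).
  set x := Num.sqrt (Fs X C t beta (ne w)).
  have S0 : 0 <= S := sqrtr_ge0 _.
  have x0 : 0 <= x := sqrtr_ge0 _.
  have h21 := d21 x x0.
  have vS : 0 <= v * S by rewrite mulr_ge0 // ltW.
  case: (boolP (w \in B)) => wB /=.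
    have [h1 h2 h3] : [/\ dl < S, lo < x & x < hi].
      apply: hbox => i; move: wB; rewrite inE => /(_ i); rewrite /A /= in_itv /=.
      move=> /andP [a1 a2].
      rewrite /ne /noise_vec mxE ltr_norml; apply/andP; split; lra.
    have hg := hgap x ltac:(apply/andP; split; lra).
    have H : dl * e <= S * (d1 x - d2 x).
      apply: ler_pM; [exact: ltW | exact: ltW | exact: ltW | lra].
    rewrite /k mulr1; nra.
  by rewrite mulr0 addr0; nra.
have I1 : (\int[P]_w (L d2 w + k * \1_B w)%:E <= \int[P]_w (L d1 w)%:E)%E.
  apply: ge0_le_integral => //.
  - move=> w _; rewrite lee_fin addr_ge0 // mulr_ge0 // ?(ltW k0) // indicE ler0n.
  - apply/measurable_EFinP; apply: measurable_funD => //.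
    apply: measurable_funM; [exact: measurable_cst | exact: measurable_indic].
  - by apply/measurable_EFinP; exact: mL1.
  - by move=> w _; rewrite lee_fin; exact: pw.
have I2 : (\int[P]_w (L d2 w + k * \1_B w)%:E =
    \int[P]_w (L d2 w)%:E + k%:E * P B)%E.
  under eq_integral do rewrite EFinD.
  rewrite ge0_integralD //; first last.
  - by apply/measurable_EFinP; apply: measurable_funM; [exact: measurable_cst | exact: measurable_indic].
  - by move=> w _; rewrite lee_fin mulr_ge0 // ?(ltW k0) // indicE ler0n.
  - by apply/measurable_EFinP; exact: mL2.
  - by move=> w _; rewrite lee_fin.
  have H := @integralZl_indic _ _ _ P setT measurableT (fun _ => B) k
    ltac:(by rewrite ltNge (ltW k0)) mB.
  rewrite /= in H; rewrite H integral_indic // setIT.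
  by [].
apply: (lt_le_trans _ I1); rewrite I2 lteDl; first by rewrite mule_gt0.
rewrite ge0_fin_numE //; apply: integral_ge0 => w _; rewrite lee_fin; exact: L2ge0.
Qed.
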